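(* Let $f=Mh\in\mathbb C[U_1,\ldots,U_n]$, where $M$ is a monomial $U_1^{\alpha_1}\cdots U_n^{\alpha_n}$ and $h\in\mathbb C[U_1,\ldots,U_n]$ has nonzero constant term. Then there exists $m\ge1$ with $\mathcal L(f^m)\neq0$. (Equivalently: if $f$ is of this form with $\mathcal L(f^m)=0$ for all $m\ge 1$, then $f=0$, which is impossible; so no such $f$ exists.)
   Context: $\mathcal L:\mathbb C[U_1,\ldots,U_n]\to\mathbb C$ is the $\mathbb C$-linear map defined on monomials by $\mathcal L(U_1^{\ell_1}\cdots U_n^{\ell_n})=\ell_1!\cdots\ell_n!$. *)

(* Defs.v *)
From HB Require Import structures.
From mathcomp Require Import all_boot all_order all_algebra.
Set Implicit Arguments. Unset Strict Implicit. Unset Printing Implicit Defensive.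
Import Order.TTheory GRing.Theory Num.Theory.
Local Open Scope ring_scope.

(* Multivariate polynomials in U_1..U_n over a coefficient ring R, represented
   as formal finite sums  sum_{(c,e) in p} c * U^e  (a list of terms).
   The polynomial ring is the quotient of such formal sums; all notions
   used below (product, power, constant term, L) are compatible with
   that quotient, so this representation is faithful. *)

Definition expo (n : nat) := {ffun 'I_n -> nat}.

Definition fpoly (R : Type) (n : nat) := seq (R * expo n).

Definition expo0 (n : nat) : expo n := [ffun => 0%N].
Definition expoD (n : nat) (a b : expo n) : expo n := [ffun i => (a i + b i)%N].

Definition fmul (R : nzRingType) (n : nat) (p q : fpoly R n) : fpoly R n :=
  [seq (a.1 * b.1, expoD a.2 b.2) | a <- p, b <- q].

Definition fone (R : nzRingType) (n : nat) : fpoly R n := [:: (1, expo0 n)].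

Definition fexp (R : nzRingType) (n : nat) (p : fpoly R n) (m : nat) : fpoly R n :=
  iter m (fmul p) (fone R n).

Definition monomial_mul (R : nzRingType) (n : nat) (alpha : expo n) (p : fpoly R n)
  : fpoly R n := [seq (t.1, expoD alpha t.2) | t <- p].

Definition const_coef (R : nzRingType) (n : nat) (p : fpoly R n) : R :=
  \sum_(t <- p | t.2 == expo0 n) t.1.

(* the linear map L : U^l |-> l_1! ... l_n! *)
Definition Lmono (n : nat) (e : expo n) : nat := (\prod_(i < n) (e i)`!)%N.

Definition Lfun (R : nzRingType) (n : nat) (p : fpoly R n) : R :=
  \sum_(t <- p) t.1 * (Lmono t.2)%:R.

(* Main.v *)
From Stdlib Require Import Classical.
Require Import Defs.
From HB Require Import structures.
From mathcomp Require Import all_boot all_order all_algebra zify ring.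
From mathcomp Require Import mpoly.
Import Order.TTheory GRing.Theory Num.Theory.
Local Open Scope ring_scope.
Set Implicit Arguments. Unset Strict Implicit. Unset Printing Implicit Defensive.

Section Closure.
Variable K : numFieldType.

Record closedR (S : K -> Prop) : Prop := ClosedR {
  cl0 : S 0; cl1 : S 1; clD : forall x y, S x -> S y -> S (x + y);
  clN : forall x, S x -> S (- x); clM : forall x y, S x -> S y -> S (x * y) }.

Variable S : K -> Prop.
Hypothesis cS : closedR S.

Lemma cl_sum I r (P : pred I) F : (forall i, P i -> S (F i)) ->
  S (\sum_(i <- r | P i) F i).
Proof. by move=> H; apply: big_ind => //; [exact: (cl0 cS) | exact: (clD cS)]. Qed.

Lemma cl_prod I r (P : pred I) F : (forall i, P i -> S (F i)) ->
  S (\prod_(i <- r | P i) F i).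
Proof. by move=> H; apply: big_ind => //; [exact: (cl1 cS) | exact: (clM cS)]. Qed.

Lemma clB x y : S x -> S y -> S (x - y).
Proof. by move=> Hx Hy; apply: (clD cS) => //; apply: (clN cS). Qed.

Lemma clMn x k : S x -> S (x *+ k).
Proof. by move=> Hx; elim: k => [|k IH]; rewrite ?mulr0n ?mulrS; [exact: (cl0 cS)|by apply: (clD cS)]. Qed.

Lemma clX x k : S x -> S (x ^+ k).
Proof. by move=> Hx; elim: k => [|k IH]; rewrite ?expr0 ?exprS; [exact: (cl1 cS)|by apply: (clM cS)]. Qed.

Lemma cln k : S k%:R.
Proof. exact: (clMn k (cl1 cS)). Qed.

Lemma clz (z : int) : S z%:~R.
Proof.
case: z => k; first by rewrite -pmulrn; exact: cln.
rewrite NegzE mulrNz -pmulrn; apply: (clN cS). exact: cln.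
Qed.

Definition OverS (P : {poly K}) := forall i, S P`_i.

Lemma overC c : S c -> OverS c%:P.
Proof. by move=> Hc i; rewrite coefC; case: (i == 0)%N => //; exact: (cl0 cS). Qed.

Lemma overX : OverS 'X.
Proof. by move=> i; rewrite coefX; case: (i == 1)%N; [exact: (cl1 cS)|exact: (cl0 cS)]. Qed.

Lemma overD P Q : OverS P -> OverS Q -> OverS (P + Q).
Proof. by move=> HP HQ i; rewrite coefD; apply: (clD cS). Qed.

Lemma overN P : OverS P -> OverS (- P).
Proof. by move=> HP i; rewrite coefN; apply: (clN cS). Qed.

Lemma overB P Q : OverS P -> OverS Q -> OverS (P - Q).
Proof. by move=> HP HQ; apply: overD => //; apply: overN. Qed.

Lemma overM P Q : OverS P -> OverS Q -> OverS (P * Q).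
Proof. by move=> HP HQ i; rewrite coefM; apply: cl_sum => j _; apply: (clM cS). Qed.

Lemma overX' P k : OverS P -> OverS (P ^+ k).
Proof.
move=> HP; elim: k => [|k IH]; rewrite ?expr0 ?exprS; first exact/overC/(cl1 cS).
exact: overM.
Qed.

Lemma overZ c P : S c -> OverS P -> OverS (c *: P).
Proof. by move=> Hc HP i; rewrite coefZ; apply: (clM cS). Qed.

Lemma overXn k : OverS 'X^k.
Proof. by move=> i; rewrite coefXn; case: (i == k)%N; [exact: (cl1 cS)|exact: (cl0 cS)]. Qed.

Lemma horner_cl P x : OverS P -> S x -> S P.[x].
Proof.
move=> HP Hx; rewrite horner_coef; apply: cl_sum => i _; apply: (clM cS) => //.
exact: clX.
Qed.

Lemma closed_poly t : closedR (fun x => exists P, OverS P /\ x = P.[t]).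
Proof.
split.
- by exists 0; rewrite horner0; split=> // i; rewrite coef0; exact: (cl0 cS).
- by exists 1; rewrite hornerC; split=> //; apply/overC/(cl1 cS).
- move=> x y [P [HP ->]] [Q [HQ ->]]; exists (P + Q); rewrite hornerD.
  by split=> //; apply: overD.
- move=> x [P [HP ->]]; exists (- P); rewrite hornerN; split=> //; exact: overN.
- move=> x y [P [HP ->]] [Q [HQ ->]]; exists (P * Q); rewrite hornerM.
  by split=> //; apply: overM.
Qed.

End Closure.

Section Gen.
Variable K : numFieldType.

Fixpoint Gen (l : seq K) : K -> Prop :=
  match l with
  | [::] => fun x => exists z : int, x = z%:~R
  | t :: l' => fun x => exists P : {poly K}, OverS (Gen l') P /\ x = P.[t]
  end.

Lemma Gen_closed l : closedR (Gen l).
Proof.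
elim: l => [|t l IH] /=; last exact: closed_poly.
split.
- by exists 0; rewrite mulr0z.
- by exists 1.
- by move=> x y [a ->] [b ->]; exists (a + b); rewrite intrD.
- by move=> x [a ->]; exists (- a); rewrite intrN.
- by move=> x y [a ->] [b ->]; exists (a * b); rewrite intrM.
Qed.

Lemma Gen_cons t l x : Gen l x -> Gen (t :: l) x.
Proof. move=> Hx; exists x%:P; rewrite hornerC; split=> //; exact: (overC (Gen_closed l)). Qed.

Lemma Gen_head t l : Gen (t :: l) t.
Proof.
exists 'X; rewrite hornerX; split=> //; exact: (overX (Gen_closed l)).
Qed.

Lemma Gen_mem l x : x \in l -> Gen l x.
Proof.
elim: l => [|t l IH] //; rewrite inE => /orP [/eqP -> | /IH H].
  exact: Gen_head.
exact: Gen_cons.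
Qed.

End Gen.


Section PDiv.
Variable K : numFieldType.
Variable S : K -> Prop.
Hypothesis cS : closedR S.

Lemma pdiv (B : {poly K}) : OverS S B -> B != 0 -> forall A, OverS S A ->
  exists j M R, [/\ OverS S M, OverS S R, (size R < size B)%N &
     lead_coef B ^+ j *: A = M * B + R].
Proof.
move=> HB B0 A.
have sB : (0 < size B)%N by rewrite size_poly_gt0.
elim: (size A).+1 {-2}A (ltnSn (size A)) => // N IH {}A HAN HA.
case: (ltnP (size A) (size B)) => hAB.
  exists 0%N, 0, A; split=> //; first by move=> i; rewrite coef0; exact: (cl0 cS).
  by rewrite expr0 scale1r mul0r add0r.
set k := (size A - size B)%N.
set A' := lead_coef B *: A - (lead_coef A *: 'X^k) * B.
have hA' : OverS S A'.
  apply: overB => //; first by apply: overZ => //; exact: HB.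
  apply: overM => //; apply: overZ => //; [exact: HA | exact: overXn].
have sA' : (size A' < size A)%N.
  have sA : (0 < size A)%N by apply: leq_trans hAB.
  suff: (size A' <= (size A).-1)%N by move=> H; apply: leq_ltn_trans H _; rewrite prednK.
  apply/leq_sizeP => j hj.
  rewrite coefB coefZ -scalerAl coefZ coefXnM.
  have -> : (j < k)%N = false by apply/negbTE; rewrite -leqNgt /k; lia.
  case: (ltngtP j (size A).-1) => [hlt | hgt | ->].
  - by move: hj; rewrite leqNgt hlt.
  - rewrite nth_default; last by rewrite -(prednK sA).
    rewrite (@nth_default _ _ B); last by rewrite /k; lia.
    by rewrite !mulr0 subrr.
  - have -> : ((size A).-1 - k)%N = (size B).-1 by rewrite /k; lia.
    by rewrite -!lead_coefE mulrC subrr.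
have [j [M [R [HM HR sR E]]]] := IH A' (leq_trans sA' HAN) hA'.
exists j.+1, (M + (lead_coef B ^+ j * lead_coef A) *: 'X^k), R; split=> //.
  apply: overD => //; apply: overZ => //; last exact: overXn.
  apply: (clM cS); [apply: (clX cS); exact: HB | exact: HA].
rewrite exprSr -scalerA.
have -> : lead_coef B *: A = A' + (lead_coef A *: 'X^k) * B by rewrite /A' subrK.
by rewrite scalerDr E mulrDl -!scalerAl scalerA addrAC.
Qed.

End PDiv.

Section Alg.
Variable K : numFieldType.
Variables (l : seq K) (t : K) (P : {poly K}).
Local Notation S := (Gen l).
Let cS := Gen_closed l.
Hypotheses (HP : OverS S P) (P0 : P != 0) (Pt : P.[t] = 0).
Hypothesis Pmin : forall Q, OverS S Q -> Q != 0 -> Q.[t] = 0 -> (size P <= size Q)%N.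

Lemma min_zero Q : OverS S Q -> Q.[t] = 0 -> (size Q < size P)%N -> Q = 0.
Proof.
move=> HQ Qt sQ; apply/eqP; apply/negP => /negP Q0.
by move: (Pmin HQ Q0 Qt); rewrite leqNgt sQ.
Qed.

Lemma sizeP2 : (1 < size P)%N.
Proof.
rewrite ltnNge; apply/negP => /size1_polyC E.
move: Pt; rewrite E hornerC => E0; move: P0; by rewrite E E0 eqxx.
Qed.

Let a := lead_coef P.
Let a0 : a != 0. Proof. by rewrite lead_coef_eq0. Qed.
Let Sa : S a. Proof. exact: HP. Qed.

Lemma euclid_small N (R : {poly K}) : (size R < N)%N -> (size R < size P)%N -> OverS S R ->
  R.[t] != 0 -> exists U r, [/\ OverS S U, S r, r != 0 & U.[t] * R.[t] = r].
Proof.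
elim: N R => // N IH R sRN sRP HR Rt.
have R0 : R != 0 by apply: contraNneq Rt => ->; rewrite horner0.
case: (leqP (size R) 1) => s1.
  have ER : R.[t] = R`_0 by rewrite {1}(size1_polyC s1) hornerC.
  exists 1, R`_0; rewrite hornerC mul1r ER; split => //.
  - exact: (overC cS (cl1 cS)).
  - by rewrite -ER.
have [j [M [R2 [HM HR2 sR2 E]]]] := pdiv cS HR R0 HP.
have Et : M.[t] * R.[t] + R2.[t] = 0.
  by rewrite -hornerM -hornerD -E hornerZ Pt mulr0.
case: (eqVneq R2.[t] 0) => R2t.
  have R20 : R2 = 0 by apply: min_zero => //; apply: ltn_trans sR2 sRP.
  move: Et; rewrite R2t addr0 => /eqP; rewrite mulf_eq0 (negbTE Rt) orbF => /eqP Mt.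
  have M0 : M != 0.
    apply/eqP => M0; move/eqP: E; rewrite M0 R20 mul0r addr0 scaler_eq0.
    by rewrite expf_eq0 lead_coef_eq0 (negbTE R0) andbF (negbTE P0).
  have sM : (size M < size P)%N.
    have : size (lead_coef R ^+ j *: P) = size (M * R) by rewrite E R20 addr0.
    rewrite size_scale ?expf_neq0 ?lead_coef_eq0 // size_mul //.
    move=> ->; move: s1 (size_poly_gt0 M); rewrite M0 -subn1 => s1 hM.
    by rewrite -addnBA ?(ltnW s1) // -{1}[size M]addn0 ltn_add2l subn_gt0.
  by move: M0; rewrite (min_zero HM Mt sM) eqxx.
have [U [r [HU Sr r0 Ur]]] := IH R2 (leq_trans sR2 sRN) (ltn_trans sR2 sRP) HR2 R2t.
exists (- (U * M)), r; split => //.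
  by apply: overN => //; apply: overM.
have E2 : R2.[t] = - (M.[t] * R.[t]) by apply/eqP; rewrite -addr_eq0 addrC Et.
by rewrite hornerN hornerM -Ur E2; ring.
Qed.

Lemma euclid Q : OverS S Q -> Q.[t] != 0 ->
  exists U r, [/\ OverS S U, S r, r != 0 & U.[t] * Q.[t] = r].
Proof.
move=> HQ Qt.
have [j [M [R [HM HR sR E]]]] := pdiv cS HP P0 HQ.
have Rt : R.[t] = a ^+ j * Q.[t].
  by apply/eqP; rewrite -hornerZ E hornerD hornerM Pt mulr0 add0r.
have [|U [r [HU Sr r0 Ur]]] := @euclid_small (size R).+1 R (ltnSn _) sR HR.
  by rewrite Rt mulf_neq0 // expf_neq0.
exists (a ^+ j *: U), r; split => //.
  by apply: overZ => //; apply: (clX cS).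
by rewrite hornerZ -Ur Rt; ring.
Qed.

Lemma alg_step d : Gen (t :: l) d -> d != 0 ->
  exists d', [/\ S d', d' != 0 & forall (p k : nat) z, Gen (t :: l) z ->
      d ^+ k = p%:R * z -> exists k' z', S z' /\ d' ^+ k' = p%:R * z'].
Proof.
move=> [D [HD ->]] d0.
have [U [r [HU Sr r0 Ur]]] := euclid HD d0.
exists (a * r); split => //; first exact: (clM cS).
  by rewrite mulf_neq0.
move=> p k z [Z [HZ ->]] E.
have [j [M [R [HM HR sR ER]]]] := pdiv cS HP P0 (overM cS (overX' cS k HU) HZ).
have E2 : a ^+ j * r ^+ k = p%:R * R.[t].
  have ERt : a ^+ j * (U.[t] ^+ k * Z.[t]) = R.[t].
    move/(congr1 (horner^~ t)): ER.
    by rewrite hornerZ hornerM horner_exp hornerD hornerM Pt mulr0 add0r.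
  rewrite -Ur exprMn E -ERt; ring.
have Q0 : p%:R *: R - (a ^+ j * r ^+ k)%:P = 0.
  apply: min_zero.
  - apply: overB => //; first by apply: overZ => //; apply: cln.
    apply: (overC cS); apply: (clM cS); apply: (clX cS) => //.
  - by rewrite hornerD hornerN hornerC hornerZ E2 subrr.
  - rewrite (leq_ltn_trans (size_polyD _ _)) // gtn_max.
    rewrite (leq_ltn_trans (size_scale_leq _ _)) //= size_polyN.
    by rewrite (leq_ltn_trans (size_polyC_leq1 _)) // sizeP2.
have E3 : a ^+ j * r ^+ k = p%:R * R`_0.
  have := congr1 (fun q : {poly K} => q`_0) Q0.
  by rewrite /= coefB coefZ coefC eqxx coef0 => /eqP; rewrite subr_eq0 => /eqP.
exists (j + k)%N, (R`_0 * a ^+ k * r ^+ j); split.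
  apply: (clM cS); [apply: (clM cS); [exact: HR | exact: (clX cS)] | exact: (clX cS)].
have -> : (a * r) ^+ (j + k) = (a ^+ j * r ^+ k) * (a ^+ k * r ^+ j).
  by rewrite exprMn !exprD; ring.
rewrite E3; ring.
Qed.

End Alg.

Section Core.
Variable K : numFieldType.

Lemma trans_step (l : seq K) t d :
  (forall Q, OverS (Gen l) Q -> Q.[t] = 0 -> Q = 0) ->
  Gen (t :: l) d -> d != 0 ->
  exists d', [/\ Gen l d', d' != 0 & forall (p k : nat) z, Gen (t :: l) z ->
      d ^+ k = p%:R * z -> exists k' z', Gen l z' /\ d' ^+ k' = p%:R * z'].
Proof.
move=> Htr [D [HD ->]] d0.
have cS := Gen_closed l.
have D0 : D != 0 by apply: contraNneq d0 => ->; rewrite horner0.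
exists (lead_coef D); split => //; first exact: HD.
  by rewrite lead_coef_eq0.
move=> p k z [Z [HZ ->]] E.
have Q0 : D ^+ k - p%:R *: Z = 0.
  apply: Htr.
    apply: overB => //; first exact: overX'.
    by apply: overZ => //; apply: cln.
  by rewrite hornerD hornerN hornerZ horner_exp E subrr.
exists k, (lead_coef Z); split; first exact: HZ.
move/eqP: Q0; rewrite subr_eq0 => /eqP /(congr1 lead_coef).
by rewrite lead_coef_exp lead_coefZ.
Qed.

Lemma ex_min (Pr : nat -> Prop) : (exists n, Pr n) ->
  exists n, Pr n /\ forall m, Pr m -> (n <= m)%N.
Proof.
move=> [n Hn]; apply: NNPP => H.
suff : forall N m, (m < N)%N -> ~ Pr m by move/(_ n.+1 n (ltnSn n)).
elim=> // N IH m hm Hm; apply: H; exists m; split => // m' Hm'.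
case: (leqP m m') => // hlt; exfalso; apply: (IH m') => //.
exact: leq_trans hlt hm.
Qed.

Lemma core (l : seq K) d : d != 0 -> Gen l d ->
  exists p, prime p /\ forall k z, Gen l z -> d ^+ k != p%:R * z.
Proof.
elim: l d => [|t l IH] d d0 Hd.
  case: Hd => e De.
  have e0 : e != 0 by apply: contraNneq d0 => e0; rewrite De e0.
  have [p hp pr] := prime_above `|e|%N.
  exists p; split => // k z [z' ->]; apply/eqP => E.
  have E' : e ^+ k = p%:Z * z'.
    apply/eqP; rewrite -(eqr_int K) intrM rmorphXn /= -De E.
    by rewrite -pmulrn.
  have : (p %| `|e| ^ k)%N by rewrite -abszX E' abszM /= dvdn_mulr.
  rewrite Euclid_dvdX // => /andP [/dvdn_leq H _].
  by move: hp; rewrite ltnNge H // absz_gt0.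
have [d' [Hd' d'0 Tr]] : exists d', [/\ Gen l d', d' != 0 &
    forall (p k : nat) z, Gen (t :: l) z ->
      d ^+ k = p%:R * z -> exists k' z', Gen l z' /\ d' ^+ k' = p%:R * z'].
  case: (classic (exists P, [/\ OverS (Gen l) P, P != 0 & P.[t] = 0])) => [Hal|Htr].
    have [s [[P [HP P0 Pt sP]] Hmin]] := @ex_min
      (fun s => exists P, [/\ OverS (Gen l) P, P != 0, P.[t] = 0 & size P = s])
      ltac:(by case: Hal => P [? ? ?]; exists (size P), P).
    apply: (alg_step HP P0 Pt) => // Q HQ Q0 Qt.
    by rewrite sP; apply: Hmin; exists Q.
  apply: trans_step => // Q HQ Qt; apply: NNPP => Q0; apply: Htr.
  by exists Q; split => //; apply/eqP.
have [p [pr Hp]] := IH d' d'0 Hd'.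
exists p; split => // k z Hz; apply/eqP => E.
have [k' [z' [Hz' E']]] := Tr p k z Hz E.
by move: (Hp k' z' Hz'); rewrite E' eqxx.
Qed.

End Core.


Section Frob.
Variable R : comNzRingType.
Variable T : R -> Prop.
Hypotheses (T0 : T 0) (T1 : T 1) (TD : forall x y, T x -> T y -> T (x + y))
  (TM : forall x y, T x -> T y -> T (x * y)).
Variable p : nat.
Hypothesis pr : prime p.

Let TX x k : T x -> T (x ^+ k).
Proof. by move=> Hx; elim: k => [|k IH]; rewrite ?expr0 ?exprS //; apply: TM. Qed.

Let TMn x k : T x -> T (x *+ k).
Proof. by move=> Hx; elim: k => [|k IH]; rewrite ?mulr0n ?mulrS //; apply: TD. Qed.

Lemma frob2 x y : T x -> T y -> exists z, T z /\ (x + y) ^+ p = x ^+ p + y ^+ p + z *+ p.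
Proof.
move=> Hx Hy.
have p0 : (0 < p)%N by apply: prime_gt0.
case: p pr p0 => // p' pr' _.
rewrite exprDn big_ord_recl big_ord_recr /=.
exists (\sum_(i < p') (x ^+ (p'.+1 - (bump 0 i)) * y ^+ (bump 0 i)) *+ ('C(p'.+1, bump 0 i) %/ p'.+1)).
split.
  by apply: big_ind => // i _; apply: TMn; apply: TM; apply: TX.
rewrite subn0 expr0 mulr1.
have -> : 'C(p'.+1, @ord0 p'.+1) = 1%N by rewrite bin0.
rewrite mulr1n.
have -> : bump 0 p' = p'.+1 by rewrite /bump add1n.
rewrite subnn expr0 mul1r binn mulr1n -sumrMnl.
have -> : \sum_(i < p') x ^+ (p'.+1 - bump 0 i) * y ^+ bump 0 i *+ 'C(p'.+1, bump 0 i)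
  = \sum_(i < p') (x ^+ (p'.+1 - bump 0 i) * y ^+ bump 0 i
       *+ ('C(p'.+1, bump 0 i) %/ p'.+1)) *+ p'.+1.
  apply: eq_bigr => i _; rewrite -mulrnA divnK //.
  apply: prime_dvd_bin => //; rewrite /bump add1n /=; exact: ltn_ord.
ring.
Qed.

Lemma frob (xs : seq R) : (forall x, x \in xs -> T x) ->
  exists z, T z /\ (\sum_(x <- xs) x) ^+ p = \sum_(x <- xs) x ^+ p + z *+ p.
Proof.
elim: xs => [|x xs IH] H.
  exists 0; split => //; rewrite !big_nil mul0rn addr0 expr0n /=.
  by case: p pr => // -[].
have Hx : T x by apply: H; rewrite inE eqxx.
have [z1 [Hz1 E1]] := IH (fun y hy => H y (mem_behead (hy : y \in behead (x :: xs)))).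
have Hs : T (\sum_(y <- xs) y).
  by rewrite big_seq; apply: big_ind => // y hy; apply: H; rewrite inE hy orbT.
have [z2 [Hz2 E2]] := frob2 Hx Hs.
exists (z1 + z2); split; first exact: TD.
by rewrite !big_cons E2 E1 mulrnDl; ring.
Qed.

End Frob.


Section Emb.
Variable K : numFieldType.
Variable n : nat.

Definition mon (e : expo n) : 'X_{1..n} := [multinom e i | i < n].

Definition Emb (q : fpoly K n) : {mpoly K[n]} := \sum_(t <- q) t.1 *: 'X_[mon t.2].

Lemma mon_expoD a b : mon (expoD a b) = (mon a + mon b)%MM.
Proof. by apply/mnmP => i; rewrite mnmDE !mnmE ffunE. Qed.

Lemma mon_expo0 : mon (expo0 n) = 0%MM.
Proof. by apply/mnmP => i; rewrite mnm0E mnmE ffunE. Qed.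

Lemma Emb_cat q r : Emb (q ++ r) = Emb q + Emb r.
Proof. by rewrite /Emb big_cat. Qed.

Lemma Emb_fmul q r : Emb (fmul q r) = Emb q * Emb r.
Proof.
rewrite /Emb /fmul big_allpairs_dep big_distrl; apply: eq_bigr => a _.
rewrite big_distrr; apply: eq_bigr => b _ /=.
by rewrite mon_expoD mpolyXD -scalerAl -scalerAr scalerA.
Qed.

Lemma Emb_fone : Emb (fone K n) = 1.
Proof. by rewrite /Emb big_seq1 /= mon_expo0 mpolyX0 scale1r. Qed.

Lemma Emb_fexp q m : Emb (fexp q m) = Emb q ^+ m.
Proof.
elim: m => [|m IH]; first by rewrite expr0 -Emb_fone.
by rewrite exprS -IH -Emb_fmul.
Qed.

Lemma Emb_mm a q : Emb (monomial_mul a q) = 'X_[mon a] * Emb q.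
Proof.
rewrite /Emb /monomial_mul big_map big_distrr; apply: eq_bigr => t _ /=.
by rewrite mon_expoD mpolyXD -scalerAr.
Qed.

Definition Phi (w : 'X_{1..n} -> K) (q : fpoly K n) := \sum_(t <- q) t.1 * w (mon t.2).

Lemma Phi_cat w q r : Phi w (q ++ r) = Phi w q + Phi w r.
Proof. by rewrite /Phi big_cat. Qed.

Lemma Phi_factor w q (M : seq 'X_{1..n}) : uniq M ->
  (forall t, t \in q -> mon t.2 \in M) ->
  Phi w q = \sum_(m <- M) (Emb q)@_m * w m.
Proof.
move=> uM HM.
have -> : \sum_(m <- M) (Emb q)@_m * w m =
  \sum_(m <- M) \sum_(t <- q) t.1 * (mon t.2 == m)%:R * w m.
  apply: eq_bigr => m _; rewrite /Emb raddf_sum /= big_distrl; apply: eq_bigr => t _.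
  by rewrite mcoeffZ mcoeffX.
rewrite exchange_big /Phi [LHS]big_seq [RHS]big_seq; apply: eq_bigr => t ht.
rewrite (bigD1_seq (mon t.2)) ?HM //= eqxx mulr1 big1 ?addr0 // => m hm.
by rewrite eq_sym (negbTE hm) mulr0 mul0r.
Qed.

Lemma Phi_Emb w q r : Emb q = Emb r -> Phi w q = Phi w r.
Proof.
move=> E; set M := undup [seq mon t.2 | t <- q ++ r].
have uM : uniq M by apply: undup_uniq.
have HM : forall t, t \in q ++ r -> mon t.2 \in M.
  by move=> t ht; rewrite mem_undup; apply/mapP; exists t.
rewrite (@Phi_factor w q M) // ?(@Phi_factor w r M) ?E // => t ht; apply: HM;
  by rewrite mem_cat ht ?orbT.
Qed.

End Emb.


Section Key.
Variable K : numFieldType.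
Variable n : nat.

Definition Rr (a e : expo n) : nat := (\prod_(i < n) (a i + e i) ^_ (e i))%N.

Lemma Lmono_expoD a e : Lmono (expoD a e) = (Lmono a * Rr a e)%N.
Proof.
rewrite /Lmono /Rr -big_split /=; apply: eq_bigr => i _.
by rewrite ffunE -(ffact_fact (leq_addl (a i) (e i))) addnK mulnC.
Qed.

Lemma Lfun_mm (a : expo n) (q : fpoly K n) :
  Lfun (monomial_mul a q) = (Lmono a)%:R * \sum_(t <- q) t.1 * (Rr a t.2)%:R.
Proof.
rewrite /Lfun /monomial_mul big_map mulr_sumr; apply: eq_bigr => t _ /=.
by rewrite Lmono_expoD natrM mulrCA.
Qed.

Definition wL (m : 'X_{1..n}) : K := (\prod_(i < n) (m i)`!)%:R.

Lemma Lfun_Phi (q : fpoly K n) : Lfun q = Phi wL q.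
Proof.
rewrite /Lfun /Phi; apply: eq_bigr => t _; congr (_ * _%:R).
by rewrite /Lmono; apply: eq_bigr => i _; rewrite mnmE.
Qed.

Definition expoMp (e : expo n) (p : nat) : expo n := [ffun i => (e i * p)%N].

Lemma mon_expoMp e p : mon (expoMp e p) = (mon e *+ p)%MM.
Proof. by apply/mnmP => i; rewrite mulmnE !mnmE ffunE. Qed.

Variable h : fpoly K n.
Local Notation l := (map fst h).
Local Notation G := (Gen l).
Let cG := Gen_closed l.

Lemma Gh t : t \in h -> G t.1.
Proof. by move=> ht; apply: Gen_mem; apply: map_f. Qed.

Definition TT (P : {mpoly K[n]}) :=
  exists q : fpoly K n, (forall t, t \in q -> G t.1) /\ P = Emb q.

Lemma TT0 : TT 0.
Proof. by exists [::]; split => //; rewrite /Emb big_nil. Qed.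

Lemma TT1 : TT 1.
Proof.
exists (fone K n); split; last by rewrite Emb_fone.
by move=> t; rewrite inE => /eqP ->; exact: (cl1 cG).
Qed.

Lemma TTD x y : TT x -> TT y -> TT (x + y).
Proof.
move=> [q [Hq ->]] [r [Hr ->]]; exists (q ++ r); split; last by rewrite Emb_cat.
by move=> t; rewrite mem_cat => /orP [/Hq | /Hr].
Qed.

Lemma TTM x y : TT x -> TT y -> TT (x * y).
Proof.
move=> [q [Hq ->]] [r [Hr ->]]; exists (fmul q r); split; last by rewrite Emb_fmul.
move=> t /allpairsP [[a b] [ha hb ->]] /=; apply: (clM cG); [exact: Hq | exact: Hr].
Qed.

Variable alpha : expo n.
Variable p : nat.
Hypothesis pr : prime p.

Lemma key : exists Z, G Z /\
  Lfun (fexp (monomial_mul alpha h) p) =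
    (Lmono (expoMp alpha p))%:R * (const_coef h ^+ p + Z *+ p).
Proof.
set xs := [seq t.1 *: 'X_[mon t.2] | t <- h] : seq {mpoly K[n]}.
have Hxs : forall x, x \in xs -> TT x.
  move=> x /mapP [t ht ->]; exists [:: t]; split.
    by move=> u; rewrite inE => /eqP ->; apply: Gh.
  by rewrite /Emb big_seq1.
have [zP [[qz [Hqz ->]] EF]] := frob TT0 TT1 TTD TTM pr Hxs.
set frobl := [seq (t.1 ^+ p, expoMp t.2 p) | t <- h].
set qzp := [seq (u.1 *+ p, u.2) | u <- qz].
have EE : Emb (fexp (monomial_mul alpha h) p) =
          Emb (monomial_mul (expoMp alpha p) (frobl ++ qzp)).
  rewrite Emb_fexp Emb_mm Emb_mm Emb_cat exprMn mpolyXn -mon_expoMp.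
  congr (_ * _).
  have -> : Emb h = \sum_(x <- xs) x by rewrite /Emb big_map.
  rewrite EF; congr (_ + _).
    rewrite /Emb !big_map; apply: eq_bigr => t _ /=.
    by rewrite exprZn mpolyXn mon_expoMp.
  rewrite /Emb big_map -sumrMnl; apply: eq_bigr => u _ /=.
  by rewrite scalerMnl.
rewrite Lfun_Phi (Phi_Emb _ EE) -Lfun_Phi Lfun_mm big_cat /= /frobl /qzp !big_map.
set xsc := [seq t.1 | t <- h & t.2 == expo0 n].
have Hxsc : forall x, x \in xsc -> G x.
  by move=> x /mapP [t]; rewrite mem_filter => /andP [_ ht] ->; apply: Gh.
have [z3 [Hz3 Ec]] := frob (cl0 cG) (cl1 cG) (clD cG) (clM cG) pr Hxsc.
have Ec' : const_coef h = \sum_(x <- xsc) x by rewrite /const_coef big_map big_filter.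
have Ecp : \sum_(x <- xsc) x ^+ p = \sum_(t <- h | t.2 == expo0 n) t.1 ^+ p.
  by rewrite big_map big_filter.
set A := \sum_(t <- h | t.2 != expo0 n) t.1 ^+ p * (Rr (expoMp alpha p) (expoMp t.2 p) %/ p)%:R.
set B := \sum_(u <- qz) u.1 * (Rr (expoMp alpha p) u.2)%:R.
exists (A + B - z3); split.
  apply: (clB cG) => //; apply: (clD cG).
    rewrite /A big_seq_cond; apply: (cl_sum cG) => t /andP [ht _].
    by apply: (clM cG); [apply: (clX cG); apply: Gh | apply: (cln cG)].
  rewrite /B big_seq; apply: (cl_sum cG) => u hu.
  by apply: (clM cG); [apply: Hqz | apply: (cln cG)].
have E1 : \sum_(j <- h) (j.1 ^+ p, expoMp j.2 p).1 *
        (Rr (expoMp alpha p) (j.1 ^+ p, expoMp j.2 p).2)%:R =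
    \sum_(t <- h | t.2 == expo0 n) t.1 ^+ p + A *+ p.
  rewrite (bigID (fun t => t.2 == expo0 n)) /=; congr (_ + _).
    apply: eq_bigr => t /eqP ->; rewrite /Rr big1 ?mulr1 // => i _.
    by rewrite !ffunE mul0n ffactn0.
  rewrite /A -sumrMnl; apply: eq_bigr => t ht.
  have [i hi] : exists i, t.2 i != 0%N.
    case: (pickP (fun i => t.2 i != 0%N)) => [i hi | H0]; first by exists i.
    exfalso; move/eqP: ht; apply; apply/ffunP => i; rewrite ffunE.
    by move: (H0 i) => /negbFE/eqP.
  have hd : (p %| Rr (expoMp alpha p) (expoMp t.2 p))%N.
    rewrite /Rr (bigD1 i) //= dvdn_mulr // -bin_ffact dvdn_mull //.
    apply: dvdn_fact; rewrite prime_gt0 //= ffunE.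
    by rewrite leq_pmull // lt0n.
  by rewrite -{1}(divnK hd) natrM mulrA mulr_natr.
have E2 : \sum_(j <- qz) (j.1 *+ p, j.2).1 * (Rr (expoMp alpha p) (j.1 *+ p, j.2).2)%:R
    = B *+ p.
  by rewrite /B -sumrMnl; apply: eq_bigr => u _ /=; rewrite mulrnAl.
rewrite E1 E2 -Ecp Ec' Ec; congr (_ * _); rewrite mulrnBl mulrnDl.
move: (A *+ p) (B *+ p) (z3 *+ p) (\sum_(x <- xsc) x ^+ p) => a b c s.
ring.
Qed.

End Key.

Theorem proposition4p7 (C : numClosedFieldType) (n : nat) (alpha : expo n)
  (h : fpoly C n) :
  const_coef h != 0 ->
  exists m : nat, (1 <= m)%N /\ Lfun (fexp (monomial_mul alpha h) m) != 0.
Proof.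
move=> c0.
have Gc : Gen (map fst h) (const_coef h).
  rewrite /const_coef big_seq_cond; apply: (cl_sum (Gen_closed _)) => t /andP [ht _].
  by apply: Gen_mem; apply: map_f.
have [p [pr Hp]] := core c0 Gc.
exists p; split; first exact: prime_gt0.
have [Z [HZ ->]] := key h alpha pr.
rewrite mulf_neq0 //.
  by rewrite pnatr_eq0 -lt0n prodn_gt0 // => i; rewrite fact_gt0.
apply/eqP => E; move: (Hp p (- Z) (clN (Gen_closed _) HZ)).
have E' : const_coef h ^+ p = - (Z *+ p) by apply/eqP; rewrite -addr_eq0 E.
by rewrite mulrN mulr_natl E' eqxx.
Qed.
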